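(* Let $G=(V,E)$ be the complete undirected graph on $V$ with a self-loop at every vertex, $r:V\to\mathbb{Z}_{\geq1}$, $\hat r=r(V)-|V|+1$, and let $b$ be the function on $2^E$ with $b(F)=|V(F)|-\mathrm{comp}(F)+\hat r$ for $F\neq\emptyset$ and $b(\emptyset)=0$. Let $B=\{x\in\mathbb{Z}_{\geq0}^E: x(E)=r(V),\ (V,\mathrm{supp}(x))\text{ is connected}\}$. Then $B=B(b)\cap\mathbb{Z}_{\geq0}^E$.
   Context: $r(V)=\sum_v r(v)$, $x(F)=\sum_{e\in F}x(e)$, $\mathrm{supp}(x)=\{e:x(e)\neq0\}$. For $F\subseteq E$, $V(F)$ is the set of vertices covered by $F$ and $\mathrm{comp}(F)$ the number of connected components of $(V(F),F)$. The base polymatroid of $b$ is $B(b)=\{x\in\mathbb{R}^E: x(F)\leq b(F)\ \forall F\subseteq E,\ x(E)=b(E)\}$. *)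

(* Defs.v *)
From mathcomp Require Import all_boot.
Set Implicit Arguments. Unset Strict Implicit. Unset Printing Implicit Defensive.

(* The complete graph with a
   self-loop at every vertex has edge set E = all subsets e of V with
   1 <= #|e| <= 2 (a 2-set is the edge uv, a singleton {v} the loop at v). *)
Notation edge V := {e : {set V} | (0 < #|e|) && (#|e| <= 2)}.

Section Graph.
Variable V : finType.

Definition VF (F : {set edge V}) : {set V} := \bigcup_(e in F) val e.

Definition adjF (F : {set edge V}) : rel V :=
  fun u w => [exists e in F, (u \in val e) && (w \in val e)].

Definition comp (F : {set edge V}) : nat := n_comp (adjF F) (VF F).

Definition connectedF (F : {set edge V}) : Prop :=
  forall u w : V, connect (adjF F) u w.

Definition supp (x : {ffun edge V -> nat}) : {set edge V} := [set e | x e != 0].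

Definition xsum (x : {ffun edge V -> nat}) (F : {set edge V}) : nat :=
  \sum_(e in F) x e.

Definition rV (r : V -> nat) : nat := \sum_(v : V) r v.
Definition rhat (r : V -> nat) : nat := rV r - #|V| + 1.

Definition bfun (r : V -> nat) (F : {set edge V}) : nat :=
  if F == set0 then 0 else #|VF F| - comp F + rhat r.

Definition in_base (r : V -> nat) (x : {ffun edge V -> nat}) : Prop :=
  (forall F : {set edge V}, xsum x F <= bfun r F) /\ xsum x setT = bfun r setT.

Definition in_B (r : V -> nat) (x : {ffun edge V -> nat}) : Prop :=
  xsum x setT = rV r /\ connectedF (supp x).
End Graph.

(* Main.v *)
Require Import Defs.
From mathcomp Require Import all_boot.
From mathcomp Require Import zify.
Set Implicit Arguments. Unset Strict Implicit. Unset Printing Implicit Defensive.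

Section Lem.
Variable V : finType.
Implicit Types (F G : {set edge V}).

Lemma adjF_sym F : symmetric (adjF F).
Proof.
move=> u w; apply/existsP/existsP => [[e /and3P[eF ue we]]|[e /and3P[eF ue we]]];
  by exists e; rewrite eF ue we.
Qed.

Lemma csym F : connect_sym (adjF F).
Proof. exact/sym_connect_sym/adjF_sym. Qed.

Lemma inVF F v : (v \in VF F) = [exists e in F, v \in val e].
Proof.
apply/bigcupP/existsP => [[e eF ve]|[e /andP[eF ve]]]; by exists e; rewrite ?eF.
Qed.

Lemma noedge F v : v \notin VF F -> forall y, connect (adjF F) v y -> y = v.
Proof.
move=> nv y /connectP[[|z p] //= /andP[/existsP[e /and3P[eF ve _]] _] _].
by case/negP: nv; rewrite inVF; apply/existsP; exists e; rewrite eF.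
Qed.

Definition ncT F := #|[set r | roots (adjF F) r]|.

Lemma ncT_split F : ncT F = Defs.comp F + (#|V| - #|VF F|).
Proof.
have -> : ncT F = n_comp (adjF F) V by apply: eq_card => v; rewrite !inE andbT.
rewrite (n_compC (mem (VF F))); congr (_ + _).
rewrite -(cardsC (VF F)) addKn /n_comp_mem; apply: eq_card => v; rewrite !inE /=.
rewrite andbC; case vF: (v \in VF F); move: vF; rewrite /= ?inE /=; move=> vF; rewrite ?vF /= //.
apply/eqP/(noedge (F := F) (v := v)); [exact: negbT vF | exact: connect_root].
Qed.

Lemma comp_le F : Defs.comp F <= #|VF F|.
Proof. by apply: subset_leq_card; apply/subsetP => v /andP[]. Qed.

Lemma ncT_conn F : connectedF F -> ncT F <= 1.
Proof.
move=> cF; rewrite /ncT; apply/card_le1_eqP => r s; rewrite !inE => /eqP rr /eqP rs.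
by rewrite -rr -rs; apply/(rootP (csym F)).
Qed.

Lemma conn_ncT F : ncT F <= 1 -> connectedF F.
Proof.
rewrite /ncT => /card_le1_eqP h u w; apply/(rootP (csym F)).
by apply: h; rewrite inE; apply: roots_root; exact: csym.
Qed.

Lemma ncT_gt0 F (v : V) : 0 < ncT F.
Proof. by rewrite /ncT; apply/card_gt0P; exists (root (adjF F) v); rewrite inE; apply: roots_root; exact: csym. Qed.

Lemma edge_ends (g : edge V) : exists u w,
  [/\ u \in val g, w \in val g & forall z, z \in val g -> (z == u) || (z == w)].
Proof.
have /andP[g0 g2] := valP g.
have : (#|val g| == 1) || (#|val g| == 2) by lia.
case/orP => [/cards1P [u ->] | /cards2P [u [w [_ ->]]]].
  by exists u, u; rewrite !inE eqxx; split => // z; rewrite !inE => ->.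
by exists u, w; rewrite !inE !eqxx ?orbT; split => // z; rewrite !inE.
Qed.

Lemma one_edge F g : ncT F <= ncT (g |: F) + 1.
Proof.
have [u [w [ug wg gP]]] := edge_ends g.
set e := adjF F; set e' := adjF (g |: F).
have se := csym F; have se' := csym (g |: F).
pose C z := connect e u z || connect e w z.
pose R x y := connect e x y || (C x && C y).
have CR x y : connect e x y -> C x -> C y.
  move=> cxy /orP[h|h]; apply/orP; [left|right]; exact: connect_trans h cxy.
have key x y : connect e' x y -> R x y.
  move=> cxy.
  have cl : closed e' [pred z | R x z].
    apply: intro_closed => // y1 z1 /existsP[d /and3P[dF yd zd]] /=.
    move: dF; rewrite !inE => /orP[/eqP dg|dF].
      have Cg t : t \in val d -> C t.
        rewrite dg; move=> /gP /orP[] /eqP ->; rewrite /C connect0 ?orbT //.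
      case/orP => [cx|/andP[cx _]]; apply/orP; right; apply/andP; split; try exact: Cg; try exact: cx.
      by apply: (CR y1); [rewrite se | apply: Cg].
    have ey : connect e y1 z1 by apply: connect1; apply/existsP; exists d; rewrite dF yd zd.
    case/orP => [cx|/andP[cx cy]]; apply/orP; [left; exact: connect_trans cx ey|].
    by right; rewrite cx; apply: CR ey cy.
  have := closed_connect cl cxy; rewrite !inE /R connect0 /= => <- //.
have rootC r : roots e r -> C r -> (r == root e u) || (r == root e w).
  move=> /eqP rr /orP[] h; apply/orP; [left|right];
  by rewrite -{1}rr; apply/eqP/esym/(rootP se).
pose A := [set r | roots e r] :\ root e w.
have inj : {in A &, injective (root e')}.
  move=> r1 r2; rewrite !inE => /andP[n1 r1r] /andP[n2 r2r] h.
  have /key /orP[c12|/andP[c1 c2]] : connect e' r1 r2 by apply/(rootP se').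
    by rewrite -(eqP r1r) -(eqP r2r); apply/(rootP se).
  move: (rootC _ r1r c1) (rootC _ r2r c2); rewrite (negbTE n1) (negbTE n2) !orbF.
  by move=> /eqP -> /eqP ->.
have : #|A| <= ncT (g |: F).
  rewrite -(card_in_imset inj); apply: subset_leq_card; apply/subsetP => q.
  by case/imsetP => r _ ->; rewrite inE; apply: roots_root.
rewrite /ncT (cardsD1 (root e w) [set r | roots e r]) -/A.
by case: (_ \in _) => /=; lia.
Qed.

Lemma conn_sub F G : F \subset G -> forall u w,
  connect (adjF F) u w -> connect (adjF G) u w.
Proof.
move=> sFG; apply: connect_sub => u w /existsP[d /and3P[dF ud wd]].
by apply: connect1; apply/existsP; exists d; rewrite (subsetP sFG) // ud wd.
Qed.

Lemma ind_lem n : forall F G, #|G| = n -> connectedF (F :|: G) -> ncT F <= #|G| + 1.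
Proof.
elim: n => [|n IH] F G cG cFG.
  move/eqP: cG; rewrite cards_eq0 => /eqP G0; move: cFG; rewrite G0 setU0 => /ncT_conn.
  by rewrite cards0.
have /card_gt0P [g gG] : 0 < #|G| by rewrite cG.
have cG' : #|G :\ g| = n by move: cG; rewrite (cardsD1 g) gG; case.
have e : F :|: G = (g |: F) :|: (G :\ g).
  by apply/setP => d; rewrite !inE; case: (d =P g) => [->|]; rewrite ?gG ?orbT //= orbF.
rewrite e in cFG; have := IH _ _ cG' cFG; have := one_edge F g.
rewrite cG cG'; lia.
Qed.

Definition mkedge (u w : V) : edge V.
Proof. exists [set u; w]; by rewrite cards2; case: (u != w). Defined.

Lemma adjT u w : adjF [set: edge V] u w.
Proof. by apply/existsP; exists (mkedge u w); rewrite in_setT /= !inE !eqxx ?orbT. Qed.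

Lemma rV_ge (r : V -> nat) : (forall v, 0 < r v) -> #|V| <= rV r.
Proof. by move=> hr; rewrite -sum1_card /rV; apply: leq_sum => v _; apply: hr. Qed.

Lemma bT (r : V -> nat) : (forall v, 0 < r v) -> bfun r setT = rV r.
Proof.
move=> hr; have := rV_ge hr.
case: (boolP (0 < #|V|)) => [/card_gt0P [v0 _]|]; last first.
  rewrite lt0n negbK => /eqP V0 _.
  have -> : [set: edge V] = set0.
    apply/setP => d; rewrite !inE; have /andP[/card_gt0P [v _] _] := valP d.
    by move: V0; rewrite (cardD1 v) inE.
  rewrite /bfun eqxx /rV big1 // => v _; move: V0; rewrite (cardD1 v) inE //.
have ne : [set: edge V] != set0 by apply/set0Pn; exists (mkedge v0 v0); rewrite inE.
have VFT : VF [set: edge V] = setT.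
  by apply/setP => v; rewrite inE inVF; apply/existsP; exists (mkedge v v); rewrite !inE eqxx.
have c1 : ncT [set: edge V] = 1.
  apply/eqP; rewrite eqn_leq ncT_gt0 // andbT; apply: ncT_conn => u w.
  exact/connect1/adjT.
have := ncT_split [set: edge V]; rewrite c1 VFT cardsT => hs hge.
have n0 : 0 < #|V| by apply/card_gt0P; exists v0.
rewrite /bfun (negbTE ne) VFT cardsT /rhat; lia.
Qed.


Lemma xsum_split (x : {ffun edge V -> nat}) F :
  xsum x setT = xsum x F + xsum x (~: F).
Proof.
rewrite /xsum (bigID (mem F)) /=; congr (_ + _); apply: eq_bigl => d;
by rewrite !inE.
Qed.

Lemma xsum_supp (x : {ffun edge V -> nat}) : xsum x setT = xsum x (supp x).
Proof.
rewrite /xsum (bigID (fun d => x d != 0)) /= [X in _ + X]big1 ?addn0.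
  by apply: eq_bigl => d; rewrite !inE.
by move=> d /andP[_]; rewrite negbK => /eqP.
Qed.

Lemma xsum_ge (x : {ffun edge V -> nat}) F :
  #|supp x :\: F| <= xsum x (~: F).
Proof.
rewrite -sum1_card /xsum.
rewrite [X in _ <= X](bigID (fun d => x d != 0)) /=.
apply: leq_trans (leq_addr _ _).
rewrite (eq_bigl (fun d => (d \in ~: F) && (x d != 0))); last by move=> d; rewrite !inE andbC.
by apply: leq_sum => d /andP[_]; rewrite lt0n.
Qed.

End Lem.

Theorem mainTheorem11 (V : finType) (r : V -> nat) (hr : forall v, 0 < r v) :
  forall x : {ffun edge V -> nat}, in_B r x <-> in_base r x.
Proof.
move=> x; split.
  move=> [hs hc]; split; last by rewrite hs bT.
  move=> F; rewrite /bfun; case: ifP => [/eqP -> |/negbT F0]; first by rewrite /xsum big_set0.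
  have hsplit := xsum_split x F.
  have hge := xsum_ge x F.
  have cFG : connectedF (F :|: (supp x :\: F)).
    move=> u w; apply: conn_sub (hc u w); apply/subsetP => d; rewrite !inE.
    by case: (d \in F); rewrite ?orbT.
  have hind := ind_lem (erefl _) cFG.
  have hsp := ncT_split F; have hcl := comp_le F.
  have hVF : #|VF F| <= #|V| by apply: max_card.
  have hrv := rV_ge hr.
  rewrite /rhat; lia.
move=> [hle heq]; split; first by rewrite heq bT.
move=> u w.
have hrv := rV_ge hr.
have n0 : 0 < #|V| by apply/card_gt0P; exists u.
rewrite (bT hr) xsum_supp in heq.
case: (boolP (supp x == set0)) => [/eqP S0|S0].
  by move: heq; rewrite S0 /xsum big_set0; lia.
have := hle (supp x); rewrite /bfun (negbTE S0) heq /rhat => h.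
have hsp := ncT_split (supp x); have hcl := comp_le (supp x).
have hVF : #|VF (supp x)| <= #|V| by apply: max_card.
have : ncT (supp x) <= 1 by lia.
by move/conn_ncT; apply.
Qed.
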